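(* Let $d,n\in\mathbb{N}$, $R>1$, $\epsilon\ge0$, and let $K_r(x,y)$ be a polynomial in $(x,y)$ whose operator $\mathcal K_rf(x)=\int_{-R}^RK_r(x,y)f(y)\,dy$ satisfies $\|\mathcal K_rT_k-T_k\|_{1,\mathrm{cheb}}\le\epsilon$ for all $0\le k\le d$. Let $K_{r,n}(x,y)=\prod_{i=1}^nK_r(x_i,y_i)$ and $\mathcal K_{r,n}f(x)=\int_{[-R,R]^n}K_{r,n}(x,y)f(y)\,dy$. Then for every $\alpha\in\mathbb{N}_0^n$ with $\alpha_i\le d$ for all $i$, \[ \|\mathcal K_{r,n}T_\alpha-T_\alpha\|_{1,\mathrm{cheb}}\le\epsilon\sum_{i=0}^{n-1}(1+\epsilon)^i. \] Moreover, if $\epsilon\le1/n$, then $\|\mathcal K_{r,n}T_\alpha-T_\alpha\|_{1,\mathrm{cheb}}\le e\,\epsilon\, n$.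
   Context: $T_k(x)=\cos(k\arccos x)$ is the Chebyshev polynomial of the first kind; for $\alpha\in\mathbb{N}_0^n$, $T_\alpha(x)=\prod_iT_{\alpha_i}(x_i)$; for a polynomial $p=\sum_\alpha p_\alpha T_\alpha$, $\|p\|_{1,\mathrm{cheb}}=\sum_\alpha|p_\alpha|$. $e$ is Euler's number. *)

(* Defs.v *)
From HB Require Import structures.
From mathcomp Require Import all_boot all_order all_algebra.
From mathcomp Require Import mpoly.
From mathcomp Require Import reals.
From mathcomp Require sequences.
From Stdlib Require Import ClassicalEpsilon.

Set Implicit Arguments.
Unset Strict Implicit.
Unset Printing Implicit Defensive.

Import Order.TTheory GRing.Theory Num.Theory.
Local Open Scope ring_scope.

Fixpoint cheb_at (A : pzRingType) (x : A) (k : nat) : A :=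
  match k with
  | 0 => 1
  | S k' => match k' with
            | 0 => x
            | S k'' => 2%:R * x * cheb_at x k' - cheb_at x k''
            end
  end.

Definition chebT (R : realType) (n : nat) (alpha : 'X_{1..n}) : {mpoly R[n]} :=
  \prod_(i < n) cheb_at ('X_i : {mpoly R[n]}) (alpha i).
Arguments chebT {R n}.

(* The Chebyshev coefficients of p: the (unique) family (c_alpha) indexed by the
   multi-indices of total degree < msize p (= 1 + deg p) with p = sum_alpha c_alpha T_alpha. *)
Definition cheb_coefs (R : realType) (n : nat) (p : {mpoly R[n]})
  : {ffun 'X_{1..n < msize p} -> R} :=
  epsilon (inhabits [ffun=> 0])
    (fun c : {ffun 'X_{1..n < msize p} -> R} =>
       p = \sum_(a : 'X_{1..n < msize p}) c a *: chebT (val a)).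

Definition cheb_norm1 (R : realType) (n : nat) (p : {mpoly R[n]}) : R :=
  \sum_(a : 'X_{1..n < msize p}) `|cheb_coefs p a|.

(* int_{[-Rb,Rb]^n} y^b dy *)
Definition box_int_mono (R : realType) (n : nat) (Rb : R) (b : 'X_{1..n}) : R :=
  \prod_(i < n) ((Rb ^+ (b i).+1 - (- Rb) ^+ (b i).+1) / ((b i).+1)%:R).

(* The kernel K_{r,n}(x,y) = prod_i K_r(x_i, y_i), as a polynomial in the 2n variables
   (x_1..x_n, y_1..y_n); K : {mpoly R[2]} is K_r(x,y) with variable 0 = x, 1 = y. *)
Definition kernel_n (R : realType) (n : nat) (K : {mpoly R[2]}) : {mpoly R[n + n]} :=
  \prod_(i < n) (K \mPo [tuple ('X_(lshift n i) : {mpoly R[n + n]}); 'X_(rshift n i)]).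

Definition in_y (R : realType) (n : nat) (f : {mpoly R[n]}) : {mpoly R[n + n]} :=
  f \mPo [tuple ('X_(rshift n i) : {mpoly R[n + n]}) | i < n].

Definition xpart (n : nat) (m : 'X_{1..n + n}) : 'X_{1..n} := [multinom m (lshift n i) | i < n].
Definition ypart (n : nat) (m : 'X_{1..n + n}) : 'X_{1..n} := [multinom m (rshift n i) | i < n].

(* (K_{r,n} f)(x) = int_{[-Rb,Rb]^n} K_{r,n}(x,y) f(y) dy, computed exactly on the
   polynomial G(x,y) = K_{r,n}(x,y) f(y) monomial by monomial:
   int x^a y^b dy = x^a * int_{[-Rb,Rb]^n} y^b dy. *)
Definition Kop (R : realType) (n : nat) (K : {mpoly R[2]}) (Rb : R) (f : {mpoly R[n]})
  : {mpoly R[n]} :=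
  let G := kernel_n n K * in_y f in
  \sum_(m <- msupp G) (G@_m * box_int_mono Rb (ypart m)) *: 'X_[xpart m].

Definition euler (R : realType) : R := sequences.expR (1 : R).

(* Main.v *)
Require Import Defs.
From HB Require Import structures.
From mathcomp Require Import all_boot all_order all_algebra.
From mathcomp Require Import mpoly.
From mathcomp Require Import reals.
From mathcomp Require Import ssrcomplements.
From mathcomp Require Import zify.
From mathcomp Require exp.
From Stdlib Require Import ClassicalEpsilon.
Import Order.TTheory GRing.Theory Num.Theory.
Local Open Scope ring_scope.

Unset Implicit Arguments.
Set Strict Implicit.


Section Cheb.
Variable R : realType.

Fixpoint tc (k l : nat) : R :=
  match k with
  | 0 => (l == 0)%:R
  | S k' => match k' with
            | 0 => (l == 1)%:R
            | S k'' => 2%:R * (if l is l'.+1 then tc k' l' else 0) - tc k'' l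
            end
  end.

Lemma tcSS k l : tc k.+2 l = 2%:R * (if l is l'.+1 then tc k.+1 l' else 0) - tc k l.
Proof. by []. Qed.
Lemma tc0 l : tc 0 l = (l == 0)%:R. Proof. by []. Qed.
Lemma tc1 l : tc 1 l = (l == 1)%:R. Proof. by []. Qed.
Arguments tc : simpl never.

Lemma tc_gt2 k : (forall l, (k < l)%N -> tc k l = 0) /\ (forall l, (k.+1 < l)%N -> tc k.+1 l = 0).
Proof.
elim: k => [|k [IH1 IH2]].
  split => l /= Hl; first by rewrite tc0; case: l Hl.
  by rewrite tc1; case: l Hl => [|[|l]].
split => // l Hl /=.
rewrite tcSS IH1 ?subr0; last by apply: ltn_trans Hl.
case: l Hl => [|l] Hl /=; first by rewrite mulr0.
by rewrite IH2 ?mulr0.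
Qed.

Lemma tc_gt k l : (k < l)%N -> tc k l = 0.
Proof. by case: (tc_gt2 k) => H _; apply: H. Qed.

Lemma tc_diag2 k : 0 < tc k k /\ 0 < tc k.+1 k.+1.
Proof.
elim: k => [|k [_ IH2]]; first by split; rewrite ?tc0 ?tc1 eqxx ltr01.
split => //=.
by rewrite tcSS (@tc_gt k k.+2) // subr0 mulr_gt0.
Qed.

Lemma tc_diag k : tc k k != 0.
Proof. by case: (tc_diag2 k) => H _; rewrite gt_eqF. Qed.

Lemma sum_delta (V : lmodType R) N j (F : nat -> V) : (j < N)%N ->
  \sum_(l < N) ((l : nat) == j)%:R *: F l = F j.
Proof.
move=> Hj; rewrite (bigD1 (Ordinal Hj)) //= eqxx scale1r big1 ?addr0 //.
move=> i Hi; suff -> : (i == j :> nat) = false by rewrite scale0r.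
by apply/negbTE; apply: contra Hi => /eqP Hij; apply/eqP/val_inj.
Qed.

Lemma cheb_expand2 (n : nat) (x : {mpoly R[n]}) N k :
  ((k < N)%N -> cheb_at x k = \sum_(l < N) tc k l *: x ^+ l) /\
  ((k.+1 < N)%N -> cheb_at x k.+1 = \sum_(l < N) tc k.+1 l *: x ^+ l).
Proof.
elim: k => [|k [IH1 IH2]].
  split => H /=.
    under eq_bigr do rewrite tc0.
    by rewrite (@sum_delta _ _ _ (fun l => x ^+ l)).
  under eq_bigr do rewrite tc1.
  by rewrite (@sum_delta _ _ _ (fun l => x ^+ l)) ?expr1 //.
split => // H.
have HN : (k.+1 < N)%N by apply: ltn_trans H.
have HN0 : (k < N)%N by apply: ltn_trans HN.
rewrite [cheb_at x k.+2]/= -/(cheb_at x k.+1) -/(cheb_at x k).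
rewrite IH2 // IH1 //.
clear IH1 IH2; case: N H HN HN0 => [//|N'] H HN HN0.
have -> : \sum_(l < N'.+1) tc k.+2 l *: x ^+ l =
   2%:R *: \sum_(l < N'.+1) (if (l : nat) is l'.+1 then tc k.+1 l' else 0) *: x ^+ l
   - \sum_(l < N'.+1) tc k l *: x ^+ l.
  rewrite scaler_sumr -sumrB; apply: eq_bigr => l _.
  by rewrite tcSS scalerBl scalerA.
congr (_ - _).
rewrite [in RHS]big_ord_recl /= scale0r add0r.
rewrite big_ord_recr /= (@tc_gt k.+1 N') // scale0r addr0.
rewrite mulr_sumr scaler_sumr; apply: eq_bigr => l _.
by rewrite /bump /= add1n exprS -mulrA -scalerAr mulr_natl -scaler_nat.
Qed.

Lemma cheb_expand (n : nat) (x : {mpoly R[n]}) N k : (k < N)%N ->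
  cheb_at x k = \sum_(l < N) tc k l *: x ^+ l.
Proof. by case: (@cheb_expand2 n x N k). Qed.

End Cheb.

Unset Implicit Arguments.
Set Strict Implicit.


Section Coef.
Variable R : realType.

Lemma mdeg_ge (n : nat) (a : 'X_{1..n}) i : (a i <= mdeg a)%N.
Proof. by rewrite mdegE (bigD1 i) //= leq_addr. Qed.

Lemma mcoeff_sumX (n : nat) (J : finType) (c : J -> R) (mu : J -> 'X_{1..n}) m :
  (\sum_(j : J) c j *: 'X_[mu j])@_m = \sum_(j : J) c j * (mu j == m)%:R.
Proof.
rewrite raddf_sum; apply: eq_bigr => j _ /=.
by rewrite mcoeffZ mcoeffX.
Qed.

Lemma mnm_of_ffun (n N : nat) (f : {ffun 'I_n -> 'I_N}) j :
  (\sum_(i < n) U_(i) *+ f i)%MM j = f j.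
Proof.
rewrite mnm_sumE (bigD1 j) //= big1 ?addn0.
  by rewrite mulmnE mnm1E eqxx mul1n.
by move=> i /negbTE Hi; rewrite mulmnE mnm1E Hi.
Qed.

Lemma chebT_expand (n : nat) (a : 'X_{1..n}) :
  chebT a = \sum_(f : {ffun 'I_n -> 'I_(mdeg a).+1})
     (\prod_(i < n) tc R (a i) (f i)) *: 'X_[(\sum_(i < n) U_(i) *+ f i)%MM].
Proof.
rewrite /chebT.
transitivity (\prod_(i < n) \sum_(l < (mdeg a).+1) tc R (a i) l *: 'X_[U_(i) *+ l]).
  apply: eq_bigr => i _; rewrite (@cheb_expand R n _ (mdeg a).+1) ?ltnS ?mdeg_ge //.
  by apply: eq_bigr => l _; rewrite mpolyXn.
rewrite bigA_distr_bigA; apply: eq_bigr => f _.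
by rewrite scaler_prod mprodXE.
Qed.

Lemma chebT_coef (n : nat) (a m : 'X_{1..n}) :
  (chebT a)@_m = \prod_(i < n) tc R (a i) (m i).
Proof.
rewrite chebT_expand mcoeff_sumX.
have [Hm|Hm] := boolP [forall i : 'I_n, m i < (mdeg a).+1]%N.
  pose f0 : {ffun 'I_n -> 'I_(mdeg a).+1} := [ffun i => Ordinal (forallP Hm i)].
  rewrite (bigD1 f0) //= [X in _ + X]big1 ?addr0.
    have -> : ((\sum_(i < n) U_(i) *+ f0 i)%MM == m).
      by apply/eqP/mnmP => j; rewrite mnm_of_ffun ffunE.
    by rewrite mulr1; apply: eq_bigr => i _; rewrite ffunE.
  move=> f Hf.
  suff -> : ((\sum_(i < n) U_(i) *+ f i)%MM == m) = false by rewrite mulr0.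
  apply/negbTE; apply: contra Hf => /eqP E; apply/eqP/ffunP => i.
  by apply/val_inj; rewrite ffunE /= -E mnm_of_ffun.
move: Hm; rewrite negb_forall => /existsP [i0 Hi0].
rewrite (bigD1 i0) //= (@tc_gt R) ?mul0r; last first.
  by rewrite -leqNgt in Hi0; apply: leq_trans Hi0; rewrite ltnS mdeg_ge.
apply: big1 => f _.
suff -> : ((\sum_(i < n) U_(i) *+ f i)%MM == m) = false by rewrite mulr0.
apply/negbTE/eqP => E; move: Hi0; rewrite -E mnm_of_ffun.
by rewrite ltn_ord.
Qed.

End Coef.

Unset Implicit Arguments.
Set Strict Implicit.


Lemma num_part (R : realType) (n : nat) (eps : R) : 0 <= eps -> eps <= 1 / n%:R ->
  eps * \sum_(i < n) (1 + eps) ^+ i <= euler R * eps * n%:R.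
Proof.
move=> e0 en.
rewrite -mulrA [euler R * _]mulrC -mulrA ler_wpM2l //.
have -> : n%:R * euler R = \sum_(i < n) euler R by rewrite sumr_const card_ord mulr_natl.
apply: ler_sum => i _.
case: n en i => [|n] en i; first by case: i.
apply: (le_trans (y := sequences.expR eps ^+ i)).
  apply: lerXn2r; rewrite ?nnegrE ?addr_ge0 //; last exact: exp.expR_ge1Dx.
  exact: exp.expR_ge0.
rewrite -exp.expRM_natr /euler exp.ler_expR.
apply: (le_trans (y := 1 / n.+1%:R * n.+1%:R)); last by rewrite mul1r mulVf ?pnatr_eq0.
apply: ler_pM => //.
by rewrite ler_nat ltnW.
Qed.

Set Implicit Arguments.
Unset Strict Implicit.


Section Core.
Variable R : realType.

Lemma le_mdeg_eq (n : nat) (a b : 'X_{1..n}) :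
  (forall i, a i <= b i)%N -> (mdeg b <= mdeg a)%N -> a = b.
Proof.
move=> Hab Hd; apply/mnmP => i; apply/eqP; rewrite eqn_leq Hab /=.
rewrite leqNgt; apply/negP => Hi.
have H1 : (\sum_(j | j != i) a j <= \sum_(j | j != i) b j)%N by apply: leq_sum.
move: Hd; rewrite !mdegE (bigD1 i) //= (bigD1 i (P := xpredT)) //=.
move=> H2; have := leq_trans (leq_add Hi H1) H2; by rewrite addSn ltnn.
Qed.

Lemma triang (n : nat) (J : finType) (g : J -> 'X_{1..n}) (c : J -> R)
    (p : {mpoly R[n]}) :
  injective g -> p = \sum_(j : J) c j *: chebT (g j) ->
  forall j, c j != 0 -> (mdeg (g j) < msize p)%N.
Proof.
move=> ginj Hp j Hj.
case: (@arg_maxnP J j (fun k => c k != 0) (fun k => mdeg (g k)) Hj) => j0 Hj0 Hmax.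
apply: (@leq_ltn_trans (mdeg (g j0))); first exact: Hmax.
apply: msize_mdeg_lt; rewrite mcoeff_msupp.
have -> : p@_(g j0) = c j0 * \prod_(i < n) tc R (g j0 i) (g j0 i).
  rewrite Hp raddf_sum (bigD1 j0) //= mcoeffZ chebT_coef [X in _ + X]big1 ?addr0 //.
  move=> k Hk /=; rewrite mcoeffZ chebT_coef.
  have [Hck|Hck] := eqVneq (c k) 0; first by rewrite Hck mul0r.
  have [Hall|Hall] := boolP [forall i : 'I_n, g j0 i <= g k i]%N.
    have E : g j0 = g k.
      apply: le_mdeg_eq; first by move=> i; apply: (forallP Hall).
      exact: Hmax.
    by move/ginj: E => E; rewrite E eqxx in Hk.
  move: Hall; rewrite negb_forall => /existsP [i Hi].
  rewrite (bigD1 i) //= (@tc_gt R) ?mul0r ?mulr0 //.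
  by rewrite ltnNge.
rewrite mulf_neq0 //; apply/prodf_neq0 => i _; exact: tc_diag.
Qed.

Lemma regroup (n : nat) (V : zmodType) (J : finType) (g : J -> 'X_{1..n}) D
    (F : J -> V) :
  (forall j, ~~ (mdeg (g j) < D)%N -> F j = 0) ->
  \sum_(b : 'X_{1..n < D}) \sum_(j | g j == val b) F j = \sum_(j : J) F j.
Proof.
move=> HF.
under eq_bigr do rewrite big_mkcond.
rewrite exchange_big /=; apply: eq_bigr => j _.
have [Hd|Hd] := boolP (mdeg (g j) < D)%N.
  rewrite (bigD1 (BMultinom Hd)) //= eqxx big1 ?addr0 // => b Hb.
  case: ifP => // /eqP E; move: Hb; suff -> : b = BMultinom Hd by rewrite eqxx.
  by apply/val_inj; rewrite /= E.
rewrite HF // big1 // => b _; case: ifP => // /eqP E.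
Qed.

Lemma norm_rep (n : nat) (J : finType) (g : J -> 'X_{1..n}) (c : J -> R)
    (p : {mpoly R[n]}) :
  injective g -> p = \sum_(j : J) c j *: chebT (g j) ->
  cheb_norm1 p = \sum_(j : J) `|c j|.
Proof.
move=> ginj Hp.
have Htr := triang ginj Hp.
set D := msize p.
pose e : {ffun 'X_{1..n < D} -> R} := [ffun b => \sum_(j | g j == val b) c j].
have HA : p = \sum_(b : 'X_{1..n < D}) e b *: chebT (val b).
  rewrite {1}Hp -(@regroup n _ J g D (fun j => c j *: chebT (g j))); last first.
    move=> j Hj; have [->|Hc] := eqVneq (c j) 0; first by rewrite scale0r.
    by move: (Htr j Hc); rewrite (negbTE Hj).
  apply: eq_bigr => b _; rewrite ffunE scaler_suml.
  by apply: eq_bigr => j /eqP ->.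
have Hspec : p = \sum_(b : 'X_{1..n < msize p}) cheb_coefs p b *: chebT (val b).
  rewrite /cheb_coefs; apply: (@epsilon_spec _ _ (fun c0 : {ffun 'X_{1..n < msize p} -> R} =>
       p = \sum_(a : 'X_{1..n < msize p}) c0 a *: chebT (val a))).
  by exists e.
have He : forall b, cheb_coefs p b = e b.
  have H0 : (0 : {mpoly R[n]}) = \sum_(b : 'X_{1..n < D}) (cheb_coefs p b - e b) *: chebT (val b).
    rewrite (eq_bigr (fun b => cheb_coefs p b *: chebT (val b) - e b *: chebT (val b)));
      last by move=> b _; rewrite scalerBl.
    by rewrite sumrB -Hspec -HA subrr.
  move=> b; apply/eqP; rewrite -subr_eq0; apply/negP => /negP Hb.
  by move: (triang (@val_inj _ _ _) H0 Hb); rewrite msize0.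
rewrite /cheb_norm1 -/D.
under eq_bigr do rewrite He ffunE.
rewrite -(@regroup n _ J g D (fun j => `|c j|)); last first.
  move=> j Hj; have [->|Hc] := eqVneq (c j) 0; first by rewrite normr0.
  by move: (Htr j Hc); rewrite (negbTE Hj).
apply: eq_bigr => b _.
case: (pickP (fun j => g j == val b)) => [j0 Hj0|Hnone].
  have P1 : (fun j => g j == val b) =1 pred1 j0.
    by move=> j /=; rewrite -(eqP Hj0) inj_eq.
  by rewrite !(big_pred1 j0 P1).
by rewrite !big_pred0 ?normr0.
Qed.

End Core.

Set Implicit Arguments.
Unset Strict Implicit.


Section Span.
Variable R : realType.

Definition T1 (k : nat) : {mpoly R[1]} := chebT [multinom k | i < 1].

Lemma T1_coef k (m : 'X_{1..1}) : (T1 k)@_m = tc R k (m ord0).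
Proof. by rewrite /T1 chebT_coef big_ord1 mnmE. Qed.

Lemma mdeg1_eq (m : 'X_{1..1}) : mdeg m = m ord0.
Proof. by rewrite mdegE big_ord1. Qed.

Lemma msize_le_coef (n : nat) (q : {mpoly R[n]}) s :
  (forall m, (s <= mdeg m)%N -> q@_m = 0) -> (msize q <= s)%N.
Proof.
move=> H; rewrite msizeE; apply/bigmax_leqP_seq => m Hm _.
rewrite ltnNge; apply/negP => Hs; move: Hm; rewrite mcoeff_msupp H //.
by rewrite eqxx.
Qed.

Lemma span1_aux s : forall (p : {mpoly R[1]}) N, (msize p <= s)%N -> (s <= N)%N ->
  exists c : nat -> R, p = \sum_(j < N) c j *: T1 j.
Proof.
elim: s => [|s IH] p N Hp HN.
  exists (fun _ => 0); move: Hp; rewrite leqn0 msize_poly_eq0 => /eqP ->.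
  by rewrite big1 // => j _; rewrite scale0r.
pose a := p@_[multinom s | i < 1] / tc R s s.
pose q := p - a *: T1 s.
have Hq : (msize q <= s)%N.
  apply: msize_le_coef => m Hm; rewrite mcoeffB mcoeffZ T1_coef.
  rewrite mdeg1_eq in Hm.
  rewrite leq_eqVlt in Hm; case/orP: Hm => [/eqP Es | Hlt].
    have -> : m = [multinom s | i < 1].
      by apply/mnmP => i; rewrite ord1 mnmE Es.
    by rewrite mnmE /a mulfVK ?tc_diag // subrr.
  rewrite tc_gt // mulr0 subr0.
  apply/eqP; rewrite mcoeff_eq0; apply: msize_mdeg_ge.
  by rewrite mdeg1_eq; apply: leq_trans Hp _.
have [c Hc] := IH q N Hq (ltnW HN).
exists (fun j => c j + (if j == s then a else 0)).
have -> : p = q + a *: T1 s by rewrite /q subrK.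
rewrite Hc.
rewrite [in RHS](eq_bigr (fun j : 'I_N => c j *: T1 j + (if (j : nat) == s then a else 0) *: T1 j));
  last by move=> j _; rewrite scalerDl.
rewrite big_split /=; congr (_ + _).
rewrite (bigD1 (Ordinal HN)) //= eqxx big1 ?addr0 // => j Hj.
suff -> : ((j : nat) == s) = false by rewrite scale0r.
by apply/negbTE; apply: contra Hj => /eqP E; apply/eqP/val_inj.
Qed.

Lemma T1_inj N : injective (fun j : 'I_N => [multinom (j : nat) | i < 1]).
Proof.
move=> j1 j2 /mnmP /(_ ord0); rewrite !mnmE => E; exact: val_inj.
Qed.

Lemma span1_norm (p : {mpoly R[1]}) :
  exists c : nat -> R, p = \sum_(j < msize p) c j *: T1 j /\
    cheb_norm1 p = \sum_(j < msize p) `|c j|.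
Proof.
have [c Hc] := @span1_aux (msize p) p (msize p) (leqnn _) (leqnn _).
exists c; split => //.
exact: (norm_rep (@T1_inj (msize p)) Hc).
Qed.

End Span.

Set Implicit Arguments.
Unset Strict Implicit.


Section Lam.
Variable R : realType.

Lemma Lam_sum (N : nat) (V : lmodType R) (phi : 'X_{1..N} -> V) (J : finType)
   (c : J -> R) (mu : J -> 'X_{1..N}) :
  \sum_(m <- msupp (\sum_(j : J) c j *: 'X_[mu j]))
     (\sum_(j : J) c j *: 'X_[mu j])@_m *: phi m = \sum_(j : J) c j *: phi (mu j).
Proof.
set G := \sum_(j : J) c j *: 'X_[mu j].
pose D := maxn (msize G) (\max_(j : J) (mdeg (mu j)).+1).
have HG : (msize G <= D)%N by rewrite leq_maxl.
have Hmu : forall j, (mdeg (mu j) < D)%N.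
  move=> j; apply: (@leq_trans (\max_(j : J) (mdeg (mu j)).+1)); last by rewrite leq_maxr.
  exact: (@leq_bigmax _ (fun j => (mdeg (mu j)).+1)).
pose I : subFinType _ := 'X_{1..N < D}.
rewrite (big_mksub I) ?msupp_uniq //=; first last.
  by move=> x /msize_mdeg_lt /leq_trans; apply.
rewrite big_rmcond //=; last first.
  by move=> i; move/memN_msupp_eq0 ->; rewrite scale0r.
rewrite -(regroup (g := mu) (D := D) (F := fun j => c j *: phi (mu j))); last by move=> j; rewrite Hmu.
apply: eq_bigr => b _.
rewrite /G mcoeff_sumX scaler_suml [RHS]big_mkcond; apply: eq_bigr => j _ /=.
case: (eqVneq (mu j) (val b)) => [E|Hne].
  by rewrite mulr1 E.
by rewrite mulr0 scale0r.
Qed.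

End Lam.

Set Implicit Arguments.
Unset Strict Implicit.


Section Kop2.
Variable R : realType.

Definition o1 : 'I_2 := @Ordinal 2 1 isT.

Definition sub n (i : 'I_n) (P : {mpoly R[2]}) : {mpoly R[n + n]} :=
  P \mPo [tuple ('X_(lshift n i) : {mpoly R[n + n]}); 'X_(rshift n i)].

Definition nu n (i : 'I_n) (u : 'X_{1..2}) : 'X_{1..n + n} :=
  (U_(lshift n i) *+ u ord0 + U_(rshift n i) *+ u o1)%MM.

Lemma subX n i u : sub i 'X_[u] = 'X_[nu (n := n) i u].
Proof.
rewrite /sub comp_mpolyX big_ord_recl big_ord1 /nu mpolyXD -!mpolyXn.
rewrite !(tnth_nth 0) /=.
by have -> : lift ord0 ord0 = o1 by apply: val_inj.
Qed.

Lemma subE n i (P : {mpoly R[2]}) D : (msize P <= D)%N ->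
  sub i P = \sum_(u : 'X_{1..2 < D}) P@_u *: 'X_[nu (n := n) i u].
Proof.
move=> HP; rewrite {1}(mpolywE HP) /sub raddf_sum; apply: eq_bigr => u _ /=.
by rewrite comp_mpolyZ -/(sub i _) subX.
Qed.

Definition mu n D (f : {ffun 'I_n -> 'X_{1..2 < D}}) : 'X_{1..n + n} :=
  (\sum_(i < n) nu i (f i))%MM.

Lemma prod_sub n (P : 'I_n -> {mpoly R[2]}) D : (forall i, msize (P i) <= D)%N ->
  \prod_(i < n) sub i (P i) =
  \sum_(f : {ffun 'I_n -> 'X_{1..2 < D}}) (\prod_(i < n) (P i)@_(f i)) *: 'X_[mu f].
Proof.
move=> HP.
rewrite (eq_bigr (fun i => \sum_(u : 'X_{1..2 < D}) (P i)@_u *: 'X_[nu i u]));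
  last by move=> i _; apply: subE.
rewrite bigA_distr_bigA; apply: eq_bigr => f _.
by rewrite scaler_prod mprodXE.
Qed.

Lemma mu_l n D (f : {ffun 'I_n -> 'X_{1..2 < D}}) j : mu f (lshift n j) = f j ord0.
Proof.
rewrite /mu mnm_sumE (bigD1 j) //= big1 ?addn0.
  by rewrite mnmDE !mulmnE !mnm1E eqxx eq_rlshift mul1n mul0n addn0.
move=> i /negbTE Hi; rewrite mnmDE !mulmnE !mnm1E eq_rlshift.
by rewrite (inj_eq (@lshift_inj _ _)) Hi.
Qed.

Lemma mu_r n D (f : {ffun 'I_n -> 'X_{1..2 < D}}) j : mu f (rshift n j) = f j o1.
Proof.
rewrite /mu mnm_sumE (bigD1 j) //= big1 ?addn0.
  by rewrite mnmDE !mulmnE !mnm1E eqxx eq_lrshift mul1n mul0n.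
move=> i /negbTE Hi; rewrite mnmDE !mulmnE !mnm1E eq_lrshift.
by rewrite (inj_eq (@rshift_inj _ _)) Hi.
Qed.

Variable Rb : R.

Definition g0 (k : nat) : R := (Rb ^+ k.+1 - (- Rb) ^+ k.+1) / (k.+1)%:R.

Definition Lop n (G : {mpoly R[n + n]}) : {mpoly R[n]} :=
  \sum_(m <- msupp G) (G@_m * box_int_mono Rb (ypart m)) *: 'X_[xpart m].

Lemma KopE n (K : {mpoly R[2]}) (f : {mpoly R[n]}) :
  Kop K Rb f = Lop (kernel_n n K * in_y f).
Proof. by []. Qed.

Lemma Lop_prod n (P : 'I_n -> {mpoly R[2]}) D : (forall i, msize (P i) <= D)%N ->
  Lop (\prod_(i < n) sub i (P i)) =
  \sum_(f : {ffun 'I_n -> 'X_{1..2 < D}})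
     (\prod_(i < n) ((P i)@_(f i) * g0 (f i o1))) *: 'X_[[multinom (f i ord0 : nat) | i < n]].
Proof.
move=> HP; rewrite (prod_sub HP) /Lop.
under eq_bigr do rewrite -scalerA.
rewrite (Lam_sum (fun m => box_int_mono Rb (ypart m) *: 'X_[xpart m])).
apply: eq_bigr => f _; rewrite scalerA big_split /=; congr (_ *: _).
  congr (_ * _); apply: eq_bigr => i _.
  by rewrite /ypart mnmE mu_r.
congr 'X_[_]; apply/mnmP => i; rewrite /xpart !mnmE mu_l.
by [].
Qed.

End Kop2.

Set Implicit Arguments.
Unset Strict Implicit.


Lemma cheb_rmorph (A B : pzRingType) (f : {rmorphism A -> B}) (x : A) k :
  f (cheb_at x k) = cheb_at (f x) k.
Proof.
have H : forall k, f (cheb_at x k) = cheb_at (f x) k /\ f (cheb_at x k.+1) = cheb_at (f x) k.+1.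
  elim=> [|k' [IH1 IH2]]; first by split => /=; rewrite ?rmorph1.
  split => //.
  rewrite [cheb_at x k'.+2]/= -/(cheb_at x k'.+1) -/(cheb_at x k').
  rewrite [cheb_at (f x) k'.+2]/= -/(cheb_at (f x) k'.+1) -/(cheb_at (f x) k').
  by rewrite rmorphB !rmorphM rmorph_nat IH1 IH2.
by case: (H k).
Qed.

Section Kop3.
Variable R : realType.

Definition tau n (i : 'I_n) (q : {mpoly R[1]}) : {mpoly R[n]} :=
  q \mPo [tuple ('X_i : {mpoly R[n]})].

Lemma mnm_sum_gen n (h : 'I_n -> nat) j : (\sum_(i < n) U_(i) *+ h i)%MM j = h j.
Proof.
rewrite mnm_sumE (bigD1 j) //= big1 ?addn0.
  by rewrite mulmnE mnm1E eqxx mul1n.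
by move=> i /negbTE Hi; rewrite mulmnE mnm1E Hi.
Qed.

Lemma tauX n (i : 'I_n) k : tau i 'X_[[multinom k | _ < 1]] = 'X_[(U_(i) *+ k)%MM].
Proof.
by rewrite /tau comp_mpolyX big_ord1 mnmE (tnth_nth 0) /= mpolyXn.
Qed.

Definition PK (K : {mpoly R[2]}) k : {mpoly R[2]} := K * cheb_at ('X_o1 : {mpoly R[2]}) k.

Lemma G_eq n (K : {mpoly R[2]}) (a : 'X_{1..n}) :
  kernel_n n K * in_y (chebT a) = \prod_(i < n) sub i (PK K (a i)).
Proof.
rewrite /kernel_n /in_y /chebT -/(sub _ _).
rewrite rmorph_prod -big_split /=; apply: eq_bigr => i _.
rewrite /PK /sub rmorphM /=; congr (_ * _).
rewrite (@cheb_rmorph _ _ (comp_mpoly [tuple ('X_(rshift n j) : {mpoly R[n + n]}) | j < n])).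
rewrite (@cheb_rmorph _ _ (comp_mpoly [tuple ('X_(lshift n i) : {mpoly R[n + n]}); 'X_(rshift n i)])).
congr (cheb_at _ _).
by apply: etrans (comp_mpolyXU _ _) _; apply: esym; apply: etrans (comp_mpolyXU _ _) _; rewrite /= (nth_mktuple _ 0 i).
Qed.

Lemma nu_l n (i : 'I_n) u : nu i u (lshift n i) = u ord0.
Proof. by rewrite /nu mnmDE !mulmnE !mnm1E eqxx eq_rlshift mul1n mul0n addn0. Qed.
Lemma nu_r n (i : 'I_n) u : nu i u (rshift n i) = u o1.
Proof. by rewrite /nu mnmDE !mulmnE !mnm1E eqxx eq_lrshift mul1n mul0n. Qed.

Variable Rb : R.

Lemma Lop1 (P : {mpoly R[2]}) D : (msize P <= D)%N ->
  Lop Rb (sub (n := 1) ord0 P) =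
  \sum_(u : 'X_{1..2 < D}) (P@_u * g0 Rb (u o1)) *: 'X_[[multinom (u ord0 : nat) | _ < 1]].
Proof.
move=> HP; rewrite (subE _ HP) /Lop.
under eq_bigr do rewrite -scalerA.
rewrite (Lam_sum (fun m => box_int_mono Rb (ypart m) *: 'X_[xpart m])).
apply: eq_bigr => u _; rewrite scalerA; congr (_ *: _).
  congr (_ * _); rewrite /box_int_mono big_ord1 /ypart mnmE.
  by rewrite nu_r.
congr 'X_[_]; apply/mnmP => i; rewrite ord1 /xpart [LHS]mnmE [RHS]mnmE.
by rewrite ord1 nu_l.
Qed.

Lemma Kop_mult n (K : {mpoly R[2]}) (a : 'X_{1..n}) :
  Kop K Rb (chebT a) = \prod_(i < n) tau i (Kop K Rb (chebT [multinom (a i) | _ < 1])).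
Proof.
pose D := (\sum_(i < n) msize (PK K (a i)))%N.
have HD : forall i, (msize (PK K (a i)) <= D)%N.
  by move=> i; rewrite /D (bigD1 i) //= leq_addr.
rewrite KopE G_eq (Lop_prod _ HD).
under [in RHS]eq_bigr => i _.
  rewrite KopE G_eq big_ord1 mnmE (Lop1 (HD i)).
  rewrite /tau raddf_sum /=.
  under eq_bigr => u _ do rewrite comp_mpolyZ -/(tau i _) tauX.
  over.
rewrite bigA_distr_bigA; apply: eq_bigr => f _.
rewrite scaler_prod mprodXE; congr (_ *: 'X_[_]).
by apply/mnmP => j; rewrite mnmE mnm_sum_gen.
Qed.

End Kop3.

Set Implicit Arguments.
Unset Strict Implicit.


Section Final.
Variable R : realType.

Lemma norm_le (n : nat) (J : finType) (g : J -> 'X_{1..n}) (c : J -> R)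
    (p : {mpoly R[n]}) :
  p = \sum_(j : J) c j *: chebT (g j) -> cheb_norm1 p <= \sum_(j : J) `|c j|.
Proof.
move=> Hp.
pose D := (\max_(j : J) (mdeg (g j)).+1)%N.
have Hg : forall j, (mdeg (g j) < D)%N.
  by move=> j; exact: (@leq_bigmax _ (fun j => (mdeg (g j)).+1)).
pose e (b : 'X_{1..n < D}) := \sum_(j | g j == val b) c j.
have He : p = \sum_(b : 'X_{1..n < D}) e b *: chebT (val b).
  rewrite Hp -(regroup (g := g) (D := D) (F := fun j => c j *: chebT (g j))); last by move=> j; rewrite Hg.
  apply: eq_bigr => b _; rewrite scaler_suml; apply: eq_bigr => j /eqP -> //.
rewrite (norm_rep (@val_inj _ _ _) He).
rewrite -(regroup (g := g) (D := D) (F := fun j => `|c j|)); last by move=> j; rewrite Hg.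
by apply: ler_sum => b _; apply: ler_norm_sum.
Qed.

Lemma tau_T1 n (i : 'I_n) k : tau i (T1 R k) = cheb_at 'X_i k.
Proof.
rewrite /T1 /chebT big_ord1 mnmE /tau.
rewrite (@cheb_rmorph _ _ (comp_mpoly [tuple ('X_i : {mpoly R[n]})])).
congr (cheb_at _ _).
by apply: etrans (comp_mpolyXU _ _) _.
Qed.

Lemma prod_expand n N (c : 'I_n -> nat -> R) :
  \prod_(i < n) tau i (\sum_(j < N) c i j *: T1 R j) =
  \sum_(f : {ffun 'I_n -> 'I_N}) (\prod_(i < n) c i (f i)) *:
      chebT [multinom (f i : nat) | i < n].
Proof.
under eq_bigr => i _.
  rewrite /tau raddf_sum /=.
  under eq_bigr => j _ do rewrite comp_mpolyZ -/(tau i _) tau_T1.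
  over.
rewrite bigA_distr_bigA; apply: eq_bigr => f _.
rewrite scaler_prod /chebT; congr (_ *: _).
by apply: eq_bigr => i _; rewrite mnmE.
Qed.

Lemma chebT_tau n (a : 'X_{1..n}) : chebT a = \prod_(i < n) tau i (T1 R (a i)).
Proof. by rewrite /chebT; apply: eq_bigr => i _; rewrite tau_T1. Qed.

Lemma prodF n k (x e : R) : (k < n)%N ->
  \prod_(i < n) (if (i < k)%N then x else if (i == k :> nat) then e else 1) = x ^+ k * e.
Proof.
suff H : \prod_(i < n) (if (i < k)%N then x else if (i == k :> nat) then e else 1)
    = x ^+ (minn n k) * (if (k < n)%N then e else 1).
  by move=> Hk; rewrite H Hk (minn_idPr (ltnW Hk)).
elim: n => [|n IH]; first by rewrite big_ord0 min0n expr0 mul1r.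
rewrite big_ord_recr /= IH.
have [Hnk|Hnk] := ltnP n k.
  rewrite (ltnNge k n) (ltnW Hnk) /= (ltnNge k n.+1) Hnk /= !mulr1.
  by rewrite (minn_idPl Hnk) exprSr.
move: Hnk; rewrite leq_eqVlt => /orP [/eqP Ekn|Hkn].
  by rewrite -Ekn ltnn eqxx ltnSn mulr1 (minn_idPr (leqnSn k)).
rewrite Hkn (gtn_eqF Hkn) (leqW Hkn) mulr1.
by rewrite (minn_idPr (leqW (ltnW Hkn))).
Qed.

End Final.

Set Implicit Arguments.
Unset Strict Implicit.


Lemma sum_b (R : realType) N a : (a < N)%N ->
  \sum_(j < N) `|(((j : nat) == a)%:R : R)| = 1.
Proof.
move=> Ha; rewrite (bigD1 (Ordinal Ha)) //= eqxx normr1 big1 ?addr0 // => j Hj.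
suff -> : ((j : nat) == a) = false by rewrite normr0.
by apply/negbTE; apply: contra Hj => /eqP E; apply/eqP/val_inj.
Qed.

Theorem lemma15 (R : realType) (d n : nat) (Rb eps : R) (K : {mpoly R[2]}) :
  1 < Rb -> 0 <= eps ->
  (forall k : nat, (k <= d)%N ->
     cheb_norm1 (Kop K Rb (chebT [multinom k | i < 1]) - chebT [multinom k | i < 1]) <= eps) ->
  forall alpha : 'X_{1..n}, (forall i : 'I_n, (alpha i <= d)%N) ->
    cheb_norm1 (Kop K Rb (chebT alpha) - chebT alpha)
      <= eps * \sum_(i < n) (1 + eps) ^+ i
    /\ (eps <= 1 / n%:R ->
        cheb_norm1 (Kop K Rb (chebT alpha) - chebT alpha) <= euler R * eps * n%:R).
Proof.
move=> HRb He0 Hk alpha Halpha.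
suff H1 : cheb_norm1 (Kop K Rb (chebT alpha) - chebT alpha) <= eps * \sum_(i < n) (1 + eps) ^+ i.
  by split => // Hn; apply: le_trans H1 _; exact: num_part.
pose E k := Kop K Rb (T1 R k) - T1 R k.
pose N := (\sum_(k < d.+1) msize (E k) + d.+1)%N.
have HNE : forall k, (k <= d)%N -> (msize (E k) <= N)%N.
  move=> k Hkd; rewrite /N -ltnS in Hkd.
  apply: leq_trans (leq_addr _ _); rewrite (bigD1 (Ordinal Hkd)) //=.
  exact: leq_addr.
have HNa : forall i, (alpha i < N)%N.
  by move=> i; rewrite /N (leq_trans _ (leq_addl _ _)) // ltnS.
pose Pe k (c : nat -> R) := E k = \sum_(j < N) c j *: T1 R j /\
   cheb_norm1 (E k) = \sum_(j < N) `|c j|.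
pose e k := epsilon (inhabits (fun _ : nat => (0:R))) (Pe k).
have He : forall k, (k <= d)%N -> Pe k (e k).
  move=> k Hkd; apply: epsilon_spec.
  have [c Hc] := span1_aux (HNE k Hkd) (leqnn N).
  exists c; split => //.
  exact: (@norm_rep R 1 _ (fun j : 'I_N => [multinom (j : nat) | _ < 1]) (fun j : 'I_N => c j) _ (@T1_inj N) Hc).
pose b (i : 'I_n) (j : nat) : R := (j == alpha i)%:R.
pose ee (i : 'I_n) j := e (alpha i) j.
pose A i j := b i j + ee i j.
have HB : forall i, \sum_(j < N) b i j *: T1 R j = T1 R (alpha i).
  by move=> i; exact: (@sum_delta R _ N (alpha i) (fun j => T1 R j) (HNa i)).
have HE : forall i, \sum_(j < N) ee i j *: T1 R j = E (alpha i).
  by move=> i; rewrite -(He _ (Halpha i)).1.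
have HA : forall i, \sum_(j < N) A i j *: T1 R j = Kop K Rb (T1 R (alpha i)).
  move=> i; rewrite /A.
  under eq_bigr do rewrite scalerDl.
  by rewrite big_split /= HB HE /E addrC subrK.
pose Q (k : nat) := \prod_(i < n) tau i
   (\sum_(j < N) (if (i < k)%N then A i j else b i j) *: T1 R j).
have HQn : Q n = Kop K Rb (chebT alpha).
  rewrite (Kop_mult Rb K alpha) /Q; apply: eq_bigr => i _.
  by rewrite ltn_ord HA.
have HQ0 : Q 0%N = chebT alpha.
  by rewrite chebT_tau /Q; apply: eq_bigr => i _; rewrite HB.
pose C k (i : 'I_n) j := if (i < k)%N then A i j else if (i == k :> nat) then ee i j else b i j.
have HQS : forall k, (k < n)%N -> Q k.+1 - Q k =
    \prod_(i < n) tau i (\sum_(j < N) C k i j *: T1 R j).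
  move=> k Hkn; rewrite /Q (bigD1 (Ordinal Hkn)) //= [X in _ - X](bigD1 (Ordinal Hkn)) //=.
  rewrite [RHS](bigD1 (Ordinal Hkn)) //= ltnSn ltnn /C ltnn eqxx.
  have Hr : forall (F : 'I_n -> nat -> R), (forall i j, i != Ordinal Hkn -> F i j = C k i j) ->
     \prod_(i < n | i != Ordinal Hkn) tau i (\sum_(j < N) F i j *: T1 R j) =
     \prod_(i < n | i != Ordinal Hkn) tau i (\sum_(j < N) C k i j *: T1 R j).
    move=> F HF; apply: eq_bigr => i Hi; congr (tau i _).
    by apply: eq_bigr => j _; rewrite HF.
  rewrite (Hr (fun i j => if (i < k.+1)%N then A i j else b i j)); last first.
    move=> i j Hi; rewrite /C ltnS leq_eqVlt.
    have -> : (i == k :> nat) = false.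
      by apply/negbTE; apply: contra Hi => /eqP E'; apply/eqP/val_inj.
    by [].
  rewrite (Hr (fun i j => if (i < k)%N then A i j else b i j)); last first.
    move=> i j Hi; rewrite /C.
    have -> : (i == k :> nat) = false.
      by apply/negbTE; apply: contra Hi => /eqP E'; apply/eqP/val_inj.
    by case: ifP.
  rewrite -mulrBl -raddfB -sumrB; congr (tau _ _ * _).
  apply: eq_bigr => j _; rewrite -scalerBl; congr (_ *: _).
  by rewrite /A addrC addKr.
have Htel : Kop K Rb (chebT alpha) - chebT alpha =
    \sum_(k < n) \sum_(f : {ffun 'I_n -> 'I_N})
       (\prod_(i < n) C k i (f i)) *: chebT [multinom (f i : nat) | i < n].
  rewrite -HQn -HQ0 -(telescope_sumr Q (leq0n n)) big_mkord.
  by apply: eq_bigr => k _; rewrite HQS // prod_expand.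
have HN := norm_le (J := ('I_n * {ffun 'I_n -> 'I_N})%type)
   (g := fun p => [multinom (p.2 i : nat) | i < n])
   (c := fun p => \prod_(i < n) C p.1 i (p.2 i))
   (p := Kop K Rb (chebT alpha) - chebT alpha).
apply: le_trans (HN _) _.
  by rewrite Htel pair_bigA.
rewrite -(pair_bigA _ (fun (k : 'I_n) (f : {ffun 'I_n -> 'I_N}) => `|\prod_(i < n) C k i (f i)|)) /=.
rewrite mulr_sumr; apply: ler_sum => k _.
under eq_bigr do rewrite normr_prod.
rewrite -(bigA_distr_bigA (fun i (j : 'I_N) => `|C (k : nat) i j|)) /=.
rewrite mulrC -(prodF (1 + eps) eps (ltn_ord k)).
apply: ler_prod => i _; apply/andP; split; first by apply: sumr_ge0 => j _; exact: normr_ge0.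
have HEb : \sum_(j < N) `|ee i j| <= eps.
  by rewrite /ee -(He _ (Halpha i)).2; exact: Hk.
have Hbb : \sum_(j < N) `|b i j| = 1 by exact: sum_b.
rewrite /C; case: ifP => Hik.
  apply: le_trans (_ : \sum_(j < N) (`|b i j| + `|ee i j|) <= _).
    by apply: ler_sum => j _; exact: ler_normD.
  by rewrite big_split /= Hbb lerD2l.
case: ifP => Hik2 //; by rewrite Hbb.
Qed.
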